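(* Under the hypotheses of Theorem 3, Theorem 4, or Theorem 5 below, the point $(\theta^*,\theta^* )$ is uniformly globally exponentially stable for the respective system, i.e., there exist $c,\alpha>0$ with $|x(t)-(\theta^*,\theta^* )|\le c|x_\circ-(\theta^*,\theta^* )|e^{-\alpha(t-t_\circ)}$ for all solutions and all $t\ge t_\circ$. The three settings are: with $\theta^*\in\mathbb{R}^n$, $\phi:\mathbb{R}_{\ge0}\to\mathbb{R}^n$ piecewise continuous and bounded, $y^*=\phi^T\theta^*$, samples $t_1,\dots,t_N$ with $[\phi(t_1),\dots,\phi(t_N)]$ of rank $n$, $\mathcal{N}_t=1+\mu\phi^T\phi$, $B(\theta,\mu)=\sum_k\frac{\phi(t_k)}{1+\mu|\phi(t_k)|^2}(\phi^T(t_k)\theta-y^*(t_k))$: (i) $\dot\theta=-\beta(\theta-\vartheta)\mathcal{N}_t$, $\dot\vartheta=-\gamma(\phi(\phi^T\theta-y^* )+\mathcal{N}_tB(\theta,\mu))$ with $\beta,\gamma,\mu>0$, $\beta\ge2\gamma/\mu$; (ii) $\dot\theta=-\beta(\theta-\vartheta)$, $\dot\vartheta=-\gamma(\mathcal{N}_t^{-1}\phi(\phi^T\theta-y^* )+B(\theta,\mu))$ with $\beta,\gamma,\mu>0$, $\beta\ge2\gamma/\mu$; (iii) $\dot\theta=-\beta(\theta-\vartheta)$, $\dot\vartheta=-\gamma B(\theta,\mu)$ with $\beta,\gamma>0$, $\mu\ge0$.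
   Context: $x=(\theta,\vartheta)\in\mathbb{R}^{2n}$, $|\cdot|$ the Euclidean norm. *)

(* Defs.v *)
From HB Require Import structures.
From mathcomp Require Import all_boot all_order all_algebra.
From mathcomp Require Import all_classical all_reals all_analysis.
Set Implicit Arguments. Unset Strict Implicit. Unset Printing Implicit Defensive.
Import Order.TTheory GRing.Theory Num.Theory.
Import numFieldNormedType.Exports.
Local Open Scope classical_set_scope.
Local Open Scope ring_scope.

Section Defs.
Variables (R : realType) (n : nat).

Definition enorm (v : 'cV[R]_n) : R := Num.sqrt (\sum_(i < n) (v i 0) ^+ 2).

(* Euclidean norm of x = (a, b) in R^(2n). *)
Definition enorm2 (a b : 'cV[R]_n) : R :=
  Num.sqrt (\sum_(i < n) (a i 0) ^+ 2 + \sum_(i < n) (b i 0) ^+ 2).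

Definition dotv (u v : 'cV[R]_n) : R := (u^T *m v) 0 0.

(* phi : R_{>=0} -> R^n (values at t < 0 are irrelevant) is piecewise
   continuous: there is a locally finite set of break points outside of which
   phi is continuous, and one-sided limits exist everywhere on R_{>=0}. *)
Definition piecewise_continuous (phi : R -> 'cV[R]_n) : Prop :=
  exists D : set R,
    (forall a b : R, finite_set (D `&` `[a, b])) /\
    (forall t : R, 0 < t -> ~ D t -> {for t, continuous phi}) /\
    (~ D 0 -> phi x @[x --> 0^'+] --> phi 0) /\
    (forall t : R, 0 <= t -> exists l : 'cV[R]_n, phi x @[x --> t^'+] --> l) /\
    (forall t : R, 0 < t -> exists l : 'cV[R]_n, phi x @[x --> t^'-] --> l).

Definition bounded_on_nonneg (phi : R -> 'cV[R]_n) : Prop :=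
  exists M : R, forall t : R, 0 <= t -> enorm (phi t) <= M.

(* A (global, forward) solution from initial time t0 of
   thetadot = Ft t theta vartheta, varthetadot = Fv t theta vartheta:
   continuous on [t0, +oo) and satisfying the ODE at every t > t0 outside a
   locally finite exceptional set (the discontinuity times of the
   piecewise-continuous right-hand side). *)
Definition is_solution (Ft Fv : R -> 'cV[R]_n -> 'cV[R]_n -> 'cV[R]_n)
    (t0 : R) (th vth : R -> 'cV[R]_n) : Prop :=
  {within `[t0, +oo[, continuous th} /\
  {within `[t0, +oo[, continuous vth} /\
  exists D : set R,
    (forall a b : R, finite_set (D `&` `[a, b])) /\
    (forall t : R, t0 < t -> ~ D t ->
       is_derive t 1 th (Ft t (th t) (vth t)) /\
       is_derive t 1 vth (Fv t (th t) (vth t))).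

Definition UGES (Ft Fv : R -> 'cV[R]_n -> 'cV[R]_n -> 'cV[R]_n)
    (thstar : 'cV[R]_n) : Prop :=
  exists c alpha : R, 0 < c /\ 0 < alpha /\
    forall (t0 : R) (th vth : R -> 'cV[R]_n),
      0 <= t0 -> is_solution Ft Fv t0 th vth ->
      forall t : R, t0 <= t ->
        enorm2 (th t - thstar) (vth t - thstar)
        <= c * enorm2 (th t0 - thstar) (vth t0 - thstar)
             * expR (- alpha * (t - t0)).

Variables (phi : R -> 'cV[R]_n) (thstar : 'cV[R]_n) (N : nat) (tk : 'I_N -> R).

Definition ystar (t : R) : R := dotv (phi t) thstar.

Definition Nt (mu t : R) : R := 1 + mu * dotv (phi t) (phi t).

Definition Bterm (th : 'cV[R]_n) (mu : R) : 'cV[R]_n :=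
  \sum_(k < N) ((1 + mu * (enorm (phi (tk k))) ^+ 2)^-1
                 * (dotv (phi (tk k)) th - ystar (tk k))) *: phi (tk k).

Definition F1t (beta mu : R) (t : R) (th vth : 'cV[R]_n) : 'cV[R]_n :=
  - (beta * Nt mu t) *: (th - vth).
Definition F1v (gamma mu : R) (t : R) (th vth : 'cV[R]_n) : 'cV[R]_n :=
  - gamma *: ((dotv (phi t) th - ystar t) *: phi t + Nt mu t *: Bterm th mu).

Definition F2t (beta : R) (t : R) (th vth : 'cV[R]_n) : 'cV[R]_n :=
  - beta *: (th - vth).
Definition F2v (gamma mu : R) (t : R) (th vth : 'cV[R]_n) : 'cV[R]_n :=
  - gamma *: (((Nt mu t)^-1 * (dotv (phi t) th - ystar t)) *: phi t
           + Bterm th mu).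

Definition F3t (beta : R) (t : R) (th vth : 'cV[R]_n) : 'cV[R]_n :=
  - beta *: (th - vth).
Definition F3v (gamma mu : R) (t : R) (th vth : 'cV[R]_n) : 'cV[R]_n :=
  - gamma *: Bterm th mu.

End Defs.

(* Main.v *)
Require Import Defs.
From HB Require Import structures.
From mathcomp Require Import all_boot all_order all_algebra.
From mathcomp Require Import all_classical all_reals all_analysis.
From mathcomp Require Import ring lra.
Import Order.TTheory GRing.Theory Num.Theory.
Import numFieldNormedType.Exports.
Local Open Scope ring_scope.
Set Implicit Arguments. Unset Strict Implicit. Unset Printing Implicit Defensive.
Section Alg.
Variables (R : realType).

Lemma CS_sum (I : finType) (a b : I -> R) :
  (\sum_i a i * b i) ^+ 2 <= (\sum_i a i ^+ 2) * (\sum_i b i ^+ 2).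
Proof.
set A := \sum_i a i ^+ 2; set B := \sum_i b i ^+ 2; set C := \sum_i a i * b i.
have A0 : 0 <= A by apply: sumr_ge0 => i _; exact: sqr_ge0.
have H : 0 <= A * (A * B - C ^+ 2).
  have -> : A * (A * B - C ^+ 2) = \sum_i (A * b i - C * a i) ^+ 2.
    transitivity (\sum_i (A ^+ 2 * b i ^+ 2 - 2 * A * C * (a i * b i) + C ^+ 2 * a i ^+ 2)).
      rewrite big_split /= sumrB -!mulr_sumr -/A -/B -/C; ring.
    by apply: eq_bigr => i _; ring.
  by apply: sumr_ge0 => i _; exact: sqr_ge0.
have [A00|Agt0] := eqVneq A 0.
  have a0 : forall i, a i = 0.
    move=> i; apply/eqP; rewrite -sqrf_eq0; apply/eqP.
    by move/eqP: A00; rewrite psumr_eq0 => [/allP/(_ i)/[!mem_index_enum]/(_ isT)/eqP|j _]; [|exact: sqr_ge0].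
  rewrite /C big1 ?expr0n //=; last by move=> i _; rewrite a0 mul0r.
  by rewrite mulr_ge0 // sumr_ge0 // => i _; exact: sqr_ge0.
have Ap : 0 < A by rewrite lt_def Agt0 A0.
by rewrite -subr_ge0; move: H; rewrite pmulr_rge0.
Qed.
End Alg.
Section Dot.
Variables (R : realType) (n : nat).
Implicit Types (u v w : 'cV[R]_n).

Lemma dotvE u v : dotv u v = \sum_(i < n) u i 0 * v i 0.
Proof. by rewrite /dotv mxE; apply: eq_bigr => i _; rewrite mxE. Qed.

Lemma dotvC u v : dotv u v = dotv v u.
Proof. by rewrite !dotvE; apply: eq_bigr => i _; rewrite mulrC. Qed.

Lemma dotvDr u v w : dotv u (v + w) = dotv u v + dotv u w.
Proof. by rewrite !dotvE -big_split; apply: eq_bigr => i _; rewrite mxE mulrDr. Qed.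

Lemma dotvDl u v w : dotv (v + w) u = dotv v u + dotv w u.
Proof. by rewrite ![dotv _ u]dotvC dotvDr. Qed.

Lemma dotvZr a u v : dotv u (a *: v) = a * dotv u v.
Proof. by rewrite !dotvE mulr_sumr; apply: eq_bigr => i _; rewrite mxE mulrCA. Qed.

Lemma dotvZl a u v : dotv (a *: v) u = a * dotv v u.
Proof. by rewrite ![dotv _ u]dotvC dotvZr. Qed.

Lemma dotvNr u v : dotv u (- v) = - dotv u v.
Proof. by rewrite -scaleN1r dotvZr mulN1r. Qed.

Lemma dotvNl u v : dotv (- v) u = - dotv v u.
Proof. by rewrite -scaleN1r dotvZl mulN1r. Qed.

Lemma dotvBr u v w : dotv u (v - w) = dotv u v - dotv u w.
Proof. by rewrite dotvDr dotvNr. Qed.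

Lemma dotvBl u v w : dotv (v - w) u = dotv v u - dotv w u.
Proof. by rewrite dotvDl dotvNl. Qed.

Lemma dotv_sumr (m : nat) (a : 'I_m -> R) (f : 'I_m -> 'cV[R]_n) u :
  dotv u (\sum_(k < m) a k *: f k) = \sum_(k < m) a k * dotv u (f k).
Proof.
elim/big_rec2: _ => [|k y1 y2 _ <-]; last by rewrite dotvDr dotvZr.
by rewrite dotvE big1 // => i _; rewrite mxE mulr0.
Qed.

Lemma dotv_ge0 u : 0 <= dotv u u.
Proof. by rewrite dotvE sumr_ge0 // => i _; rewrite -expr2 sqr_ge0. Qed.

Lemma dotv_CS u v : dotv u v ^+ 2 <= dotv u u * dotv v v.
Proof.
have := @CS_sum R 'I_n (fun i => u i 0) (fun i => v i 0).
by rewrite !dotvE; congr (_ <= _ * _); apply: eq_bigr => i _; rewrite expr2.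
Qed.

Lemma dotv_am u v r : 0 < r -> 2 * dotv u v <= r * dotv u u + r^-1 * dotv v v.
Proof.
move=> r0; have := dotv_ge0 (r *: u - v).
rewrite !(dotvBl, dotvBr, dotvZl, dotvZr) (dotvC v u) => H.
have : 0 <= r^-1 * (r * (r * dotv u u) - r * dotv u v - (r * dotv u v - dotv v v)).
  by rewrite mulr_ge0 // invr_ge0 ltW.
have ri : r^-1 * r = 1 by rewrite mulVf // gt_eqF.
move=> H2; rewrite -subr_ge0; apply: (le_trans H2).
have -> : r^-1 * (r * (r * dotv u u) - r * dotv u v - (r * dotv u v - dotv v v))
   = (r^-1 * r) * (r * dotv u u) - 2 * ((r^-1 * r) * dotv u v) + r^-1 * dotv v v by ring.
rewrite ri !mul1r; lra.
Qed.

Lemma enorm_sqr u : enorm u ^+ 2 = dotv u u.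
Proof. by rewrite /enorm sqr_sqrtr ?dotvE; [apply: eq_bigr => i _; rewrite expr2|apply: sumr_ge0 => i _; exact: sqr_ge0]. Qed.

Lemma enorm2_sqr u v : enorm2 u v ^+ 2 = dotv u u + dotv v v.
Proof.
rewrite /enorm2 sqr_sqrtr ?dotvE.
  by congr (_ + _); apply: eq_bigr => i _; rewrite expr2.
by rewrite addr_ge0 // sumr_ge0 // => i _; exact: sqr_ge0.
Qed.

End Dot.
Section Der.
Variables (R : realType).

Lemma dD (f g : R -> R) (F G t : R) : is_derive t 1 f F -> is_derive t 1 g G ->
  is_derive t 1 (fun x => f x + g x) (F + G).
Proof. move=> ? ?; exact: is_deriveD. Qed.

Lemma dB (f g : R -> R) (F G t : R) : is_derive t 1 f F -> is_derive t 1 g G ->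
  is_derive t 1 (fun x => f x - g x) (F - G).
Proof. move=> ? ?; exact: is_deriveB. Qed.

Lemma dM (f g : R -> R) (F G t : R) : is_derive t 1 f F -> is_derive t 1 g G ->
  is_derive t 1 (fun x => f x * g x) (f t * G + g t * F).
Proof. move=> ? ?; exact: is_deriveM. Qed.

Lemma dZ (f : R -> R) (c F t : R) : is_derive t 1 f F ->
  is_derive t 1 (fun x => c * f x) (c * F).
Proof. move=> ?; exact: is_deriveZ. Qed.

Lemma dsum m (h : 'I_m -> R -> R) H (t : R) : (forall k, is_derive t 1 (h k) (H k)) ->
  is_derive t 1 (fun x => \sum_(k < m) h k x) (\sum_(k < m) H k).
Proof.
move=> Hk; have := is_derive_sum Hk.
by rewrite (_ : (\sum_(k < m) h k) = (fun x => \sum_(k < m) h k x)) // funeqE => x; rewrite fct_sumE.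
Qed.

Lemma dexp (al c x : R) : is_derive x 1 (fun y => expR (al * (y - c))) (al * expR (al * (x - c))).
Proof.
have hf : is_derive x 1 (fun y : R => al * (y - c)) al.
  have h1 : is_derive x 1 (fun y : R => y - c) (1 - 0) :=
    dB (is_derive_id x 1) (is_derive_cst c x 1).
  by have := dZ al h1; rewrite subr0 mulr1.
have df : derivable (fun y : R => al * (y - c)) x 1 by case: hf.
have dg : derivable expR (al * (x - c)) 1 by case: (is_derive_expR (al * (x - c))).
have dc : derivable (expR \o (fun y : R => al * (y - c))) x 1.
  by apply/derivable1_diffP; apply: differentiable_comp; apply/derivable1_diffP.
apply: DeriveDef => //.
have := derive1_comp df dg; rewrite !derive1E => ->.
by rewrite (@derive_val _ _ _ _ _ _ _ hf) (@derive_val _ _ _ _ _ _ _ (is_derive_expR _)) mulrC.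
Qed.

Variable n : nat.

Lemma dcomp (f : R -> 'cV[R]_n) F (t : R) i j : is_derive t 1 f F ->
  is_derive t 1 (fun x => f x i j) (F i j).
Proof.
move=> [df dv]; apply: DeriveDef; first exact: ((derivable_mxP f t 1).1 df i j).
by have := derive_mx df; rewrite dv => ->; rewrite mxE.
Qed.

Lemma ddot (f g : R -> 'cV[R]_n) F G (t : R) : is_derive t 1 f F -> is_derive t 1 g G ->
  is_derive t 1 (fun x => dotv (f x) (g x)) (dotv F (g t) + dotv (f t) G).
Proof.
move=> hf hg.
have -> : (fun x => dotv (f x) (g x)) = (fun x => \sum_(i < n) f x i 0 * g x i 0).
  by rewrite funeqE => x; rewrite dotvE.
have H := @dsum n (fun i x => f x i 0 * g x i 0) _ t (fun i => dM (dcomp i 0 hf) (dcomp i 0 hg)).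
apply: (is_derive_eq H).
by rewrite !dotvE -big_split; apply: eq_bigr => i _ /=; rewrite addrC mulrC [g t i 0 * _]mulrC.
Qed.

Lemma dvB (f g : R -> 'cV[R]_n) F G (t : R) : is_derive t 1 f F -> is_derive t 1 g G ->
  is_derive t 1 (fun x => f x - g x) (F - G).
Proof. move=> ? ?; exact: is_deriveB. Qed.

Lemma dvBc (f : R -> 'cV[R]_n) c F (t : R) : is_derive t 1 f F ->
  is_derive t 1 (fun x => f x - c) F.
Proof.
by move=> h; have := dvB h (is_derive_cst c t 1); rewrite subr0.
Qed.

End Der.
Local Open Scope classical_set_scope.
Section Cmp.
Variable R : realType.

Lemma sub_cc (a b c d : R) : a <= c -> d <= b -> `[c, d] `<=` `[a, b].
Proof.
move=> ac db x /=; rewrite !in_itv /= => /andP[h1 h2].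
by rewrite (le_trans ac h1) (le_trans h2 db).
Qed.

Lemma nincr_seq (f : R -> R) (S : seq R) : forall a b, a <= b ->
  {within `[a, b], continuous f} ->
  (forall x, a < x -> x < b -> x \notin S -> exists2 df, is_derive x 1 f df & df <= 0) ->
  f b <= f a.
Proof.
elim: S => [|s S IH] a b ab cf H.
  have [ab'|<-] : a < b \/ a = b.
      by move: ab; rewrite le_eqVlt => /orP[/eqP->|->]; [right|left].
    have hd : forall x, x \in `]a, b[%R -> is_derive x 1 f ('D_1 f x).
      move=> x; rewrite in_itv /= => /andP[ax xb].
      have [df hdf _] := H x ax xb (negbT (in_nil x)).
      by rewrite (@derive_val _ _ _ _ _ _ _ hdf).
    have [c cab E] := MVT ab' hd cf.
    rewrite -subr_le0 E; apply: mulr_le0_ge0; last by rewrite subr_ge0 ltW.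
    move: cab; rewrite in_itv /= => /andP[ac cb].
    have [df hdf dle] := H c ac cb (negbT (in_nil c)).
    by rewrite (@derive_val _ _ _ _ _ _ _ hdf).
  by [].
have [/andP[a_s sb]|hs] := boolP ((a < s) && (s < b)).
  apply: (@le_trans _ _ (f s)).
    apply: IH; first exact: ltW.
      by apply: continuous_subspaceW cf; apply: sub_cc => //; exact: ltW.
    move=> x sx xb xS; apply: H => //; first exact: lt_trans sx.
    by rewrite in_cons negb_or xS andbT gt_eqF.
  apply: IH; first exact: ltW.
    by apply: continuous_subspaceW cf; apply: sub_cc => //; exact: ltW.
  move=> x ax xs xS; apply: H => //; first exact: lt_trans xs _.
  by rewrite in_cons negb_or xS andbT lt_eqF.
apply: IH => // x ax xb xS; apply: H => //.
rewrite in_cons negb_or xS andbT; apply/eqP => xs; move: hs; rewrite -xs ax xb.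
by [].
Qed.

Lemma decay (V : R -> R) (al t0 : R) (D : set R) :
  (forall a b, finite_set (D `&` `[a, b])) ->
  {within `[t0, +oo[, continuous V} ->
  (forall t, t0 < t -> ~ D t -> exists2 dV, is_derive t 1 V dV & dV <= - al * V t) ->
  forall t, t0 <= t -> V t <= V t0 * expR (- al * (t - t0)).
Proof.
move=> Dfin cV HV t t0t.
have [S DS] := (finite_seqP _).1 (Dfin t0 t).
pose W x := V x * expR (al * (x - t0)).
have : W t <= W t0.
  apply: (nincr_seq (S := S)) => //.
    have cV' : {within `[t0, t], continuous V}.
      apply: continuous_subspaceW cV => x /=; rewrite !in_itv /= => /andP[-> _].
      by [].
    have h2 : {within `[t0, t], continuous (fun x => expR (al * (x - t0)))}.
      apply: continuous_subspaceT => y.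
      apply: continuous_comp; last exact: continuous_expR.
      apply: cvgM; first exact: cvg_cst.
      by apply: cvgB; [exact: cvg_id|exact: cvg_cst].
    by move=> x; exact: (cvgM (cV' x) (h2 x)).
  move=> x t0x xt xS.
  have nD : ~ D x.
    move=> Dx; move: xS; apply/negP; rewrite negbK.
    have : (D `&` `[t0, t]) x by split => //=; rewrite in_itv /= !ltW.
    by rewrite DS.
  have [dV hdV dle] := HV x t0x nD.
  exists (V x * (al * expR (al * (x - t0))) + expR (al * (x - t0)) * dV).
    exact: dM hdV (dexp al t0 x).
  have e0 := expR_gt0 (al * (x - t0)).
  have : expR (al * (x - t0)) * dV <= expR (al * (x - t0)) * (- al * V x).
    by rewrite ler_pM2l.
  move=> h; apply: (le_trans (lerD (lexx _) h)).
  by rewrite le_eqVlt; apply/orP; left; apply/eqP; ring.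
rewrite /W subrr mulr0 expR0 mulr1 => h.
have e0 := expR_gt0 (al * (t - t0)).
have -> : V t = V t * expR (al * (t - t0)) * expR (- al * (t - t0)).
  by rewrite -mulrA -expRD mulNr addrN expR0 mulr1.
by rewrite ler_pM2r // expR_gt0.
Qed.

End Cmp.
Local Open Scope classical_set_scope.
Section Cont.
Variable R : realType.

Lemma entry_cont m k (i : 'I_m) (j : 'I_k) : continuous (fun M : 'M[R]_(m, k) => M i j).
Proof.
move=> M A /= hA.
exists (fun i' j' => if (i' == i) && (j' == j) then A else setT).
  by move=> i' j'; case: ifP => [/andP[/eqP-> /eqP->]|_]; [exact: hA | exact: filterT].
by move=> y /= /(_ i j); rewrite !eqxx.
Qed.

Lemma cvg_entry {T : Type} (F : set_system T) {FF : Filter F} m k (f : T -> 'M[R]_(m, k)) (a : 'M[R]_(m, k)) i j :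
  f @ F --> a -> (fun x => f x i j) @ F --> a i j.
Proof. move=> h; have H := continuous_cvg _ (@entry_cont m k i j a) h; exact: (H FF). Qed.

Lemma cvg_sumI {T : Type} (F : set_system T) {FF : Filter F} m (h : 'I_m -> T -> R) (a : 'I_m -> R) :
  (forall k, h k @ F --> a k) -> (fun x => \sum_(k < m) h k x) @ F --> \sum_(k < m) a k.
Proof.
elim: m h a => [|m IH] h a H.
  under eq_cvg do rewrite big_ord0; rewrite big_ord0; exact: cvg_cst.
under eq_cvg do rewrite big_ord_recr; rewrite big_ord_recr.
apply: cvgD; last exact: H.
exact: (IH (fun k => h (widen_ord (leqnSn m) k)) (fun k => a (widen_ord (leqnSn m) k))).
Qed.

Variable n : nat.
Lemma cvg_dotv {T : Type} (F : set_system T) {FF : Filter F} (f g : T -> 'cV[R]_n) (a b : 'cV[R]_n) :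
  f @ F --> a -> g @ F --> b -> (fun x => dotv (f x) (g x)) @ F --> dotv a b.
Proof.
move=> hf hg; under eq_cvg do rewrite dotvE; rewrite dotvE.
apply: cvg_sumI => k; apply: cvgM; exact: cvg_entry.
Qed.
End Cont.
Local Open Scope classical_set_scope.
Section Lyap.
Variables (R : realType) (n : nat) (phi : R -> 'cV[R]_n) (thstar : 'cV[R]_n)
  (N : nat) (tk : 'I_N -> R) (mu beta gamma : R).

Let Ph k := phi (tk k).
Definition ck k := (1 + mu * enorm (phi (tk k)) ^+ 2)^-1.
Definition Bt (e : 'cV[R]_n) : 'cV[R]_n := \sum_(k < N) (ck k * dotv (phi (tk k)) e) *: phi (tk k).
Definition Sq (e : 'cV[R]_n) : R := \sum_(k < N) ck k * (dotv (phi (tk k)) e * dotv (phi (tk k)) e).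
Definition gg : R := gamma / (2 * beta).
Definition Vf (e u : 'cV[R]_n) : R :=
  2^-1 * dotv u u - 2^-1 * dotv e u + 4^-1 * dotv e e + gg * Sq e.
Definition dVf (e u de du : 'cV[R]_n) : R :=
  2^-1 * (dotv du u + dotv u du) - 2^-1 * (dotv de u + dotv e du)
  + 4^-1 * (dotv de e + dotv e de)
  + gg * \sum_(k < N) ck k * (dotv (phi (tk k)) e * dotv (phi (tk k)) de
                              + dotv (phi (tk k)) e * dotv (phi (tk k)) de).

Lemma Bterm_eq th : Bterm phi thstar tk th mu = Bt (th - thstar).
Proof.
rewrite /Bterm /Bt /ystar; apply: eq_bigr => k _.
by rewrite dotvBr /ck.
Qed.

Lemma dotv_Bt x e : dotv x (Bt e) =
  \sum_(k < N) ck k * (dotv (phi (tk k)) e * dotv (phi (tk k)) x).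
Proof. by rewrite dotv_sumr; apply: eq_bigr => k _; rewrite mulrA (dotvC x). Qed.

Lemma ddotc (c : 'cV[R]_n) (f : R -> 'cV[R]_n) F (t : R) : is_derive t 1 f F ->
  is_derive t 1 (fun x => dotv c (f x)) (dotv c F).
Proof.
move=> h; have := ddot (is_derive_cst c t 1) h.
have -> : dotv (0 : 'cV[R]_n) (f t) = 0 by rewrite -(scale0r (0 : 'cV[R]_n)) dotvZl mul0r.
by rewrite add0r.
Qed.

Lemma dV_derive (e u : R -> 'cV[R]_n) E U (t : R) :
  is_derive t 1 e E -> is_derive t 1 u U ->
  is_derive t 1 (fun x => Vf (e x) (u x)) (dVf (e t) (u t) E U).
Proof.
move=> he hu; rewrite /Vf /Sq /dVf.
exact: (dD (dD (dB (dZ _ (ddot hu hu)) (dZ _ (ddot he hu))) (dZ _ (ddot he he)))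
  (dZ _ (dsum (fun k => dZ (ck k) (dM (ddotc (phi (tk k)) he) (ddotc (phi (tk k)) he)))))).
Qed.

Lemma dVf_bound (e u w : 'cV[R]_n) (s k : R) : 0 < beta -> 0 < gamma -> 0 <= mu ->
  1 <= s -> 0 <= k -> gamma * k * dotv w w <= beta * s / 2 ->
  dVf e u (- (beta * s) *: u)
    (- (beta * s) *: u - (- gamma *: ((k * dotv w e) *: w + s *: Bt e)))
  <= - (beta / 4) * dotv u u - (gamma / 2) * Sq e.
Proof.
move=> b0 g0 m0 s1 k0 hw.
rewrite /dVf.
under eq_bigr do rewrite dotvZr.
set pu := \sum_(k0 < N) ck k0 * (dotv (phi (tk k0)) e * dotv (phi (tk k0)) u).
have Hsum : gg * (\sum_(k0 < N) ck k0 * (dotv (phi (tk k0)) e * (- (beta * s) * dotv (phi (tk k0)) u)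
   + dotv (phi (tk k0)) e * (- (beta * s) * dotv (phi (tk k0)) u))) = (- (gamma * s)) * pu.
  rewrite /pu mulr_sumr [RHS]mulr_sumr; apply: eq_bigr => j _.
  rewrite /gg; field; by rewrite gt_eqF.
rewrite Hsum.
rewrite !(dotvDl, dotvDr, dotvBl, dotvBr, dotvZl, dotvZr, dotvNl, dotvNr).
rewrite ?(dotvC (Bt e) u) ?(dotvC (Bt e) e) ?(dotvC u w) ?(dotvC e w) ?(dotvC u e).
rewrite !dotv_Bt -/pu.
have -> : \sum_(k0 < N) ck k0 * (dotv (phi (tk k0)) e * dotv (phi (tk k0)) e) = Sq e by [].
set a := dotv w e; set b := dotv w u; set uu := dotv u u; set ee := dotv e e;
  set eu := dotv e u; set ww := dotv w w; set pe := Sq e.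
have uu0 : 0 <= uu := dotv_ge0 u.
have pe0 : 0 <= pe.
  by apply: sumr_ge0 => j _; apply: mulr_ge0; [rewrite invr_ge0; apply: addr_ge0 => //; apply: mulr_ge0 => //; exact: sqr_ge0 | rewrite -expr2; exact: sqr_ge0].
have cs : b ^+ 2 <= ww * uu := dotv_CS w u.
have gk0 : 0 <= gamma * k by rewrite mulr_ge0 // ltW.
have h1 : gamma * k * (a * b - a * a / 2) <= gamma * k * (b * b) / 2.
  have := mulr_ge0 gk0 (sqr_ge0 (a - b)); rewrite expr2.
  nra.
have h2 : gamma * k * (b * b) <= gamma * k * (ww * uu).
  by apply: (ler_wpM2l gk0); rewrite -expr2.
have h3 := ler_wpM2r uu0 hw; rewrite -/ww in h3.
have h4 : beta * uu <= beta * s * uu.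
  have t := ler_wpM2r uu0 s1; rewrite /= mul1r in t.
  by have := ler_wpM2l (ltW b0) t; rewrite mulrA.
have h5 : gamma * pe <= gamma * s * pe.
  have t := ler_wpM2r pe0 s1; rewrite /= mul1r in t.
  by have := ler_wpM2l (ltW g0) t; rewrite mulrA.
apply: (@le_trans _ _ (- (beta * s) * uu / 2 + gamma * k * (a * b - a * a / 2) - gamma * s * pe / 2)).
  nra.
have : gamma * k * (b * b) / 2 <= beta * s * uu / 4.
  have e1 : gamma * k * (ww * uu) = gamma * k * ww * uu by rewrite !mulrA.
  lra.
lra.
Qed.

Definition Kc : R := \sum_(k < N) ck k * dotv (phi (tk k)) (phi (tk k)).

Lemma ck_gt0 k : 0 <= mu -> 0 < ck k.
Proof.
move=> m0; rewrite /ck invr_gt0; apply: (lt_le_trans ltr01).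
by rewrite lerDl mulr_ge0 // sqr_ge0.
Qed.

Lemma Sq_ge0 e : 0 <= mu -> 0 <= Sq e.
Proof.
move=> m0; apply: sumr_ge0 => k _; apply: mulr_ge0; first exact: ltW (ck_gt0 k m0).
by rewrite -expr2 sqr_ge0.
Qed.

Lemma Kc_ge0 : 0 <= mu -> 0 <= Kc.
Proof.
move=> m0; apply: sumr_ge0 => k _; apply: mulr_ge0; first exact: ltW (ck_gt0 k m0).
exact: dotv_ge0.
Qed.

Lemma Sq_upper e : 0 <= mu -> Sq e <= Kc * dotv e e.
Proof.
move=> m0; rewrite /Kc mulr_suml; apply: ler_sum => k _.
rewrite -mulrA; apply: (ler_wpM2l (ltW (ck_gt0 k m0))).
by rewrite -expr2; exact: dotv_CS.
Qed.

Lemma gg_ge0 : 0 < beta -> 0 < gamma -> 0 <= gg.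
Proof. by move=> b0 g0; rewrite /gg divr_ge0 // ?mulr_ge0 // ltW. Qed.

Lemma Vf_lower e z : 0 < beta -> 0 < gamma -> 0 <= mu ->
  (dotv e e + dotv z z) / 12 <= Vf e (e - z).
Proof.
move=> b0 g0 m0; rewrite /Vf !(dotvBl, dotvBr) (dotvC z e).
have h1 : 0 <= gg * Sq e by rewrite mulr_ge0 // ?gg_ge0 // Sq_ge0.
have h2 := @dotv_am R n e z (2 / 3) ltac:(lra).
rewrite invf_div in h2.
have := dotv_ge0 e; have := dotv_ge0 z.
lra.
Qed.

Lemma Vf_upper e z : 0 < beta -> 0 < gamma -> 0 <= mu ->
  Vf e (e - z) <= (1 + gg * Kc) * (dotv e e + dotv z z).
Proof.
move=> b0 g0 m0; rewrite /Vf !(dotvBl, dotvBr) (dotvC z e).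
have h1 : gg * Sq e <= gg * (Kc * dotv e e) by apply: (ler_wpM2l (gg_ge0 b0 g0)); exact: Sq_upper.
have h2 := dotv_ge0 (e + z); rewrite !(dotvDl, dotvDr) (dotvC z e) in h2.
have h3 : 0 <= gg * Kc * dotv z z.
  by apply: mulr_ge0; [apply: mulr_ge0; [exact: (gg_ge0 b0 g0)|exact: (Kc_ge0 m0)]|exact: dotv_ge0].
have h4 : gg * (Kc * dotv e e) = gg * Kc * dotv e e by rewrite mulrA.
have := dotv_ge0 e; have := dotv_ge0 z.
lra.
Qed.

Lemma rate_bound e z p m : 0 < gamma -> 0 <= m -> m <= beta / 4 -> m <= gamma * p / 2 ->
  p * dotv e e <= Sq e ->
  - (beta / 4) * dotv (e - z) (e - z) - (gamma / 2) * Sq e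
  <= - (m / 3) * (dotv e e + dotv z z).
Proof.
move=> g0 m0 mb mg hp.
set uu := dotv (e - z) (e - z).
have uu0 : 0 <= uu := dotv_ge0 _.
have ee0 : 0 <= dotv e e := dotv_ge0 _.
have huu : uu = dotv e e - 2 * dotv e z + dotv z z.
  by rewrite /uu !(dotvBl, dotvBr) (dotvC z e); ring.
have h2 := @dotv_am R n e z (3 / 2) ltac:(lra).
rewrite invf_div in h2.
have f1 : 0 <= (beta / 4 - m) * uu by rewrite mulr_ge0 // subr_ge0.
have f2 : 0 <= (gamma * p / 2 - m) * dotv e e by rewrite mulr_ge0 // subr_ge0.
have f3 : gamma * (p * dotv e e) <= gamma * Sq e.
  exact: (ler_wpM2l (ltW g0) hp).
have f4 : 0 <= m * (3 * (dotv e e + uu) - (dotv e e + dotv z z)).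
  by rewrite mulr_ge0 // huu; lra.
have f5 : gamma * (p * dotv e e) = gamma * p * dotv e e by rewrite mulrA.
lra.
Qed.

Lemma Sq_lower : 0 <= mu -> \rank (\matrix_(i < n, k < N) phi (tk k) i 0) = n ->
  exists2 p, 0 < p & forall e, p * dotv e e <= Sq e.
Proof.
move=> m0 hr.
set M := \matrix_(i < n, k < N) phi (tk k) i 0.
have /row_freeP [B hB] : row_free M by rewrite /row_free hr.
set F := \sum_(i < n) \sum_(k < N) B k i ^+ 2.
set C0 := 1 + mu * \sum_(k < N) enorm (phi (tk k)) ^+ 2.
have S0 : 0 <= \sum_(k < N) enorm (phi (tk k)) ^+ 2 by apply: sumr_ge0 => k _; exact: sqr_ge0.
have C0p : 0 < C0 by rewrite /C0; apply: (lt_le_trans ltr01); rewrite lerDl mulr_ge0.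
have F0 : 0 <= F by apply: sumr_ge0 => i _; apply: sumr_ge0 => k _; exact: sqr_ge0.
have F1 : 0 < F + 1 by apply: (le_lt_trans F0); rewrite ltrDl ltr01.
exists (C0^-1 / (F + 1)); first by rewrite divr_gt0 // invr_gt0.
move=> e.
pose v := fun k => dotv (phi (tk k)) e.
have he : forall i, e i 0 = \sum_(k < N) v k * B k i.
  move=> i.
  have : (e^T *m (M *m B)) 0 i = e i 0 by rewrite hB mulmx1 mxE.
  rewrite mulmxA mxE => <-; apply: eq_bigr => k _; congr (_ * _).
  rewrite mxE /v dotvE; apply: eq_bigr => j _; rewrite !mxE mulrC.
  by [].
set Sv := \sum_(k < N) v k ^+ 2.
have Sv0 : 0 <= Sv by apply: sumr_ge0 => k _; exact: sqr_ge0.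
have h1 : dotv e e <= F * Sv.
  rewrite dotvE /F mulr_suml; apply: ler_sum => i _.
  rewrite -expr2 he; apply: le_trans (CS_sum v (fun k => B k i)) _.
  by rewrite mulrC.
have h2 : C0^-1 * Sv <= Sq e.
  rewrite /Sq /Sv mulr_sumr; apply: ler_sum => k _.
  rewrite /v -expr2; apply: (ler_wpM2r (sqr_ge0 _)).
  rewrite /ck lef_pV2 ?posrE //; last first.
    by apply: (lt_le_trans ltr01); rewrite lerDl mulr_ge0 // sqr_ge0.
  rewrite /C0 lerD2l; apply: (ler_wpM2l m0).
  by rewrite (bigD1 k) //= lerDl sumr_ge0 // => j _; exact: sqr_ge0.
set q := F / (F + 1).
have q1 : q <= 1 by rewrite /q ler_pdivrMr // mul1r lerDl ler01.
have q0 : 0 <= q by rewrite /q divr_ge0 // ltW.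
apply: le_trans h2.
apply: (@le_trans _ _ (C0^-1 / (F + 1) * (F * Sv))).
  by apply: ler_wpM2l h1; rewrite divr_ge0 // ?invr_ge0 ltW.
have -> : C0^-1 / (F + 1) * (F * Sv) = C0^-1 * (q * Sv).
  by rewrite /q -!mulrA; congr (_ * _); rewrite mulrCA.
have C0i : 0 <= C0^-1 by rewrite invr_ge0 ltW.
apply: (ler_wpM2l C0i).
by rewrite -{2}(mul1r Sv); apply: ler_wpM2r.
Qed.

Lemma cvg_Vf {T : Type} (F : set_system T) {FF : Filter F} (f g : T -> 'cV[R]_n) (a b : 'cV[R]_n) :
  f @ F --> a -> g @ F --> b -> (fun y => Vf (f y) (g y)) @ F --> Vf a b.
Proof.
move=> hf hg; rewrite /Vf /Sq.
apply: cvgD; first apply: cvgD; first apply: cvgB.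
- exact: cvgMl_tmp (cvg_dotv hg hg).
- exact: cvgMl_tmp (cvg_dotv hf hg).
- exact: cvgMl_tmp (cvg_dotv hf hf).
apply: cvgMl_tmp; apply: cvg_sumI => k; apply: cvgMl_tmp.
by apply: cvgM; apply: cvg_dotv => //; exact: cvg_cst.
Qed.

End Lyap.
Local Open Scope classical_set_scope.
Section Gen.
Variables (R : realType) (n : nat) (phi : R -> 'cV[R]_n) (thstar : 'cV[R]_n)
  (N : nat) (tk : 'I_N -> R) (mu beta gamma : R).

Lemma generic (Ft Fv : R -> 'cV[R]_n -> 'cV[R]_n -> 'cV[R]_n) :
  0 < beta -> 0 < gamma -> 0 <= mu ->
  \rank (\matrix_(i < n, k < N) phi (tk k) i 0) = n ->
  (forall t th vth, exists s k w, [/\ 1 <= s, 0 <= k, gamma * k * dotv w w <= beta * s / 2,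
      Ft t th vth = - (beta * s) *: (th - vth) &
      Fv t th vth = - gamma *: ((k * dotv w (th - thstar)) *: w
                     + s *: Bt phi tk mu (th - thstar))]) ->
  UGES Ft Fv thstar.
Proof.
move=> b0 g0 m0 hr HF.
have [p p0 hp] := Sq_lower m0 hr.
set m := Num.min (beta / 4) (gamma * p / 2).
have mpos : 0 < m by rewrite /m lt_min !divr_gt0 // mulr_gt0.
have mb : m <= beta / 4 by rewrite /m ge_min lexx.
have mg : m <= gamma * p / 2 by rewrite /m ge_min lexx orbT.
set G := 1 + gg beta gamma * Kc phi tk mu.
have G1 : 1 <= G by rewrite /G lerDl mulr_ge0 // ?gg_ge0 // Kc_ge0.
have G0 : 0 < G by apply: lt_le_trans G1.
set al := m / 3 / G.
have al0 : 0 < al by rewrite /al !divr_gt0.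
exists (Num.sqrt (12 * G)), (al / 2); split; [rewrite sqrtr_gt0; apply: mulr_gt0 => //; lra | split; [apply: divr_gt0 => //; lra |]].
move=> t0 th vth t00 [cth [cvth [D [Dfin HD]]]] t tt.
pose V x := Vf phi tk mu beta gamma (th x - thstar) (th x - vth x).
have Vdec : V t <= V t0 * expR (- al * (t - t0)).
  apply: (decay (D := D)) => //.
    move=> x; apply: cvg_Vf.
      by apply: cvgB; [exact: cth | exact: cvg_cst].
    by apply: cvgB; [exact: cth | exact: cvth].
  move=> x t0x nD.
  have [hth hvth] := HD x t0x nD.
  have [s [k [w [s1 k0 hw hFt hFv]]]] := HF x (th x) (vth x).
  have he := dvBc thstar hth.
  have hu := dvB hth hvth.
  have hV := dV_derive phi tk mu beta gamma he hu.
  exists (dVf phi tk mu beta gamma (th x - thstar) (th x - vth x)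
            (Ft x (th x) (vth x)) (Ft x (th x) (vth x) - Fv x (th x) (vth x))); first exact: hV.
  rewrite hFt hFv.
  apply: le_trans (dVf_bound phi tk (th x - thstar) (th x - vth x) b0 g0 m0 s1 k0 hw) _.
  have E : th x - vth x = (th x - thstar) - (vth x - thstar) by rewrite opprB addrA subrK.
  rewrite E.
  apply: le_trans (rate_bound (vth x - thstar) g0 (ltW mpos) mb mg (hp _)) _.
  have hG : al * G = m / 3 by rewrite /al divfK // gt_eqF.
  have hVu := Vf_upper phi tk (th x - thstar) (vth x - thstar) b0 g0 m0.
  have := ler_wpM2l (ltW al0) hVu; rewrite mulrA hG -/G /V E.
  lra.
have Et : forall y, th y - vth y = (th y - thstar) - (vth y - thstar).
  by move=> y; rewrite opprB addrA subrK.
rewrite /V !Et in Vdec.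
have hl := Vf_lower phi tk (th t - thstar) (vth t - thstar) b0 g0 m0.
have hu0 := Vf_upper phi tk (th t0 - thstar) (vth t0 - thstar) b0 g0 m0.
set Ex := expR (- al * (t - t0)) in Vdec *.
have Ex0 : 0 < Ex := expR_gt0 _.
have := ler_wpM2r (ltW Ex0) hu0; rewrite -/G => h3.
set X1 := dotv (th t - thstar) (th t - thstar) + dotv (vth t - thstar) (vth t - thstar) in hl *.
set X0 := dotv (th t0 - thstar) (th t0 - thstar) + dotv (vth t0 - thstar) (vth t0 - thstar) in h3 *.
have key : X1 <= 12 * G * X0 * Ex.
  have : 12 * G * X0 * Ex = 12 * (G * X0 * Ex) by rewrite !mulrA.
  lra.
have lhs0 : 0 <= enorm2 (th t - thstar) (vth t - thstar) := sqrtr_ge0 _.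
have rhs0 : 0 <= Num.sqrt (12 * G) * enorm2 (th t0 - thstar) (vth t0 - thstar)
                  * expR (- (al / 2) * (t - t0)).
  by rewrite !mulr_ge0 ?sqrtr_ge0 ?expR_ge0.
rewrite -ler_sqr ?nnegrE //.
rewrite !exprMn !enorm2_sqr sqr_sqrtr; last by apply: mulr_ge0; [lra | exact: ltW].
rewrite -/X1 -/X0 expr2 -expRD.
have -> : - (al / 2) * (t - t0) + - (al / 2) * (t - t0) = - al * (t - t0).
  by rewrite -mulrDl -opprD -splitr.
by rewrite -/Ex.
Qed.
End Gen.
Local Close Scope classical_set_scope.
Local Open Scope ring_scope.
Unset Implicit Arguments.
Theorem mainTheorem8 (R : realType) (n : nat) (phi : R -> 'cV[R]_n)
    (thstar : 'cV[R]_n) (N : nat) (tk : 'I_N -> R) :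
  piecewise_continuous phi ->
  bounded_on_nonneg phi ->
  (forall k, 0 <= tk k) ->
  \rank (\matrix_(i < n, k < N) phi (tk k) i 0) = n ->
  (* Theorem 3, system (i) *)
  (forall beta gamma mu : R, 0 < beta -> 0 < gamma -> 0 < mu ->
     2 * gamma / mu <= beta ->
     UGES (F1t phi beta mu) (F1v phi thstar tk gamma mu) thstar) /\
  (* Theorem 4, system (ii) *)
  (forall beta gamma mu : R, 0 < beta -> 0 < gamma -> 0 < mu ->
     2 * gamma / mu <= beta ->
     UGES (F2t (n:=n) beta) (F2v phi thstar tk gamma mu) thstar) /\
  (* Theorem 5, system (iii) *)
  (forall beta gamma mu : R, 0 < beta -> 0 < gamma -> 0 <= mu ->
     UGES (F3t (n:=n) beta) (F3v phi thstar tk gamma mu) thstar).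
Proof.
move=> _ _ _ hr.
have key : forall beta gamma mu : R, 0 < beta -> 0 < gamma -> 0 < mu ->
    2 * gamma / mu <= beta -> forall t, 2 * gamma * dotv (phi t) (phi t) <= beta * Nt phi mu t.
  move=> beta gamma mu b0 g0 m0 hb t.
  have h1 : 2 * gamma <= beta * mu by rewrite -ler_pdivrMr.
  have ww := dotv_ge0 (phi t).
  have h2 := ler_wpM2r ww h1.
  rewrite /Nt; have : beta * mu * dotv (phi t) (phi t) = beta * (mu * dotv (phi t) (phi t)) by rewrite mulrA.
  lra.
have Npos : forall mu t, 0 <= mu -> 1 <= Nt phi mu t.
  by move=> mu t m0; rewrite /Nt lerDl mulr_ge0 // dotv_ge0.
split; [|split].
- move=> beta gamma mu b0 g0 m0 hb.
  apply: (generic b0 g0 (ltW m0) hr) => t th vth.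
  exists (Nt phi mu t), 1, (phi t); split.
  + exact: Npos (ltW m0).
  + exact: ler01.
  + have := key _ _ _ b0 g0 m0 hb t; rewrite mulr1; lra.
  + by [].
  + by rewrite /F1v Bterm_eq /ystar dotvBr mul1r.
- move=> beta gamma mu b0 g0 m0 hb.
  apply: (generic b0 g0 (ltW m0) hr) => t th vth.
  have N0 : 0 < Nt phi mu t by apply: lt_le_trans (Npos mu t (ltW m0)).
  exists 1, (Nt phi mu t)^-1, (phi t); split.
  + exact: lexx.
  + by rewrite invr_ge0 ltW.
  + rewrite mulrAC ler_pdivrMr //.
    have := key _ _ _ b0 g0 m0 hb t; lra.
  + by rewrite /F2t mulr1.
  + by rewrite /F2v Bterm_eq /ystar dotvBr scale1r.
- move=> beta gamma mu b0 g0 m0.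
  apply: (generic b0 g0 m0 hr) => t th vth.
  exists 1, 0, 0; split.
  + exact: lexx.
  + exact: lexx.
  + rewrite mulr0 mul0r mulr1; apply: divr_ge0; lra.
  + by rewrite /F3t mulr1.
  + by rewrite /F3v Bterm_eq mul0r scale0r add0r scale1r.
Qed.
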